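(* Let $M\cong\mathbb{Z}^n$ be a lattice, $\mathbb{T}=\mathrm{Spec}\,\mathbb{C}[M]$, and identify the automorphism group of the variety $\mathbb{T}$ with $\mathrm{Aut}(\mathbb{T})=\mathbb{T}\rtimes\mathrm{GL}(M)$ (translations by $\mathbb{T}$, and $A\in\mathrm{GL}(M)$ acting via $\chi^m\mapsto\chi^{A(m)}$). Let $\mathbb{W}_1,\mathbb{W}_2$ be finite subgroups of $\mathrm{GL}(M)$ and $G_i=\mathbb{T}\rtimes\mathbb{W}_i\subset\mathrm{Aut}(\mathbb{T})$ with their natural actions on $\mathbb{T}$. The following are equivalent: (a) there exist an isomorphism $\varphi\colon G_1\to G_2$ and a $\varphi$-equivariant biregular map $\Phi\colon\mathbb{T}\to\mathbb{T}$; (b) $G_1$ and $G_2$ are conjugate in $\mathrm{Aut}(\mathbb{T})$; (c) $\mathbb{W}_1$ and $\mathbb{W}_2$ are conjugate in $\mathrm{GL}(M)$.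
   Context: For a group homomorphism $\varphi\colon G_1\to G_2$, a map $\Phi\colon\mathbb{T}\to\mathbb{T}$ is $\varphi$-equivariant if $\Phi(g\cdot x)=\varphi(g)\cdot\Phi(x)$ for all $g\in G_1$, $x\in\mathbb{T}$. *)

(* Defs.v *)
From HB Require Import structures.
From mathcomp Require Import all_boot all_order all_algebra.
From mathcomp Require Import complex.
From mathcomp Require Import reals.

Set Implicit Arguments.
Unset Strict Implicit.
Unset Printing Implicit Defensive.

Import Order.TTheory GRing.Theory Num.Theory.
Local Open Scope ring_scope.

Section Torus.
Variables (R : realType) (n : nat).

(* The lattice M = Z^n is 'rV[int]_n; GL(M) = invertible integer matrices
   (A \in unitmx).  A point of T = Spec C[M] = Hom(M, C^x) is recorded by
   its values on the standard basis: a row vector of nonzero complex numbers. *)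
Definition torus_pred (x : 'rV[R[i]]_n) : bool := [forall j, x 0 j != 0].
Definition torus := {x : 'rV[R[i]]_n | torus_pred x}.

Lemma torus_pred1 : torus_pred (const_mx 1).
Proof. by apply/forallP => j; rewrite mxE oner_neq0. Qed.

Definition torus1 : torus := exist _ (const_mx 1) torus_pred1.

Definition chi (m : 'rV[int]_n) (x : torus) : R[i] :=
  \prod_(j < n) ((val x) 0 j) ^ (m 0 j).

Definition tmul (t x : torus) : torus :=
  insubd torus1 (\row_j ((val t) 0 j * (val x) 0 j)).

(* Action of A in GL(M) on T, characterised by chi^m o (act A) = chi^(m A),
   i.e. A acts via chi^m |-> chi^(A(m)) (M as row vectors, A acting on the
   right); act (A *m B) = act A \o act B. *)
Definition act (A : 'M[int]_n) (x : torus) : torus :=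
  insubd torus1 (\row_j chi (row j A) x).

Definition aut (t : torus) (A : 'M[int]_n) : torus -> torus :=
  fun x => tmul t (act A x).

Definition in_Aut (h : torus -> torus) : Prop :=
  exists t A, A \in unitmx /\ h = aut t A.

Definition semidirect (W : {pred 'M[int]_n}) (g : torus -> torus) : Prop :=
  exists t A, A \in W /\ g = aut t A.

Definition finite_GL_subgroup (W : {pred 'M[int]_n}) : Prop :=
  [/\ exists s : seq 'M[int]_n, forall A, A \in W <-> A \in s,
      forall A, A \in W -> A \in unitmx,
      1%:M \in W,
      forall A B, A \in W -> B \in W -> A *m B \in W
    & forall A, A \in W -> invmx A \in W].

(* Regular functions on T: elements of C[M], i.e. finite C-linear
   combinations of characters. *)
Definition regular_fun (f : torus -> R[i]) : Prop :=
  exists s : seq (R[i] * 'rV[int]_n),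
    forall x, f x = \sum_(p <- s) p.1 * chi p.2 x.

(* A morphism T -> T: pullback sends C[M] into C[M]. *)
Definition regular_map (F : torus -> torus) : Prop :=
  forall m, regular_fun (fun x => chi m (F x)).

Definition biregular (F : torus -> torus) : Prop :=
  exists G : torus -> torus,
    [/\ cancel F G, cancel G F, regular_map F & regular_map G].

Definition group_iso (G1 G2 : (torus -> torus) -> Prop)
    (phi : (torus -> torus) -> (torus -> torus)) : Prop :=
  [/\ forall g, G1 g -> G2 (phi g),
      forall g h, G1 g -> G1 h -> phi g = phi h -> g = h,
      forall g2, G2 g2 -> exists2 g, G1 g & phi g = g2
    & forall g h, G1 g -> G1 h -> phi (g \o h) = phi g \o phi h].

Definition equivariant (G1 : (torus -> torus) -> Prop)
    (phi : (torus -> torus) -> (torus -> torus)) (Phi : torus -> torus) :=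
  forall g, G1 g -> forall x, Phi (g x) = phi g (Phi x).

(* G2 = h G1 h^{-1} for some h in Aut(T) (h is bijective, so
   g2 \o h = h \o g1 iff g2 = h g1 h^{-1}). *)
Definition conj_in_Aut (G1 G2 : (torus -> torus) -> Prop) : Prop :=
  exists2 h, in_Aut h &
    forall g2, G2 g2 <-> exists2 g1, G1 g1 & g2 \o h = h \o g1.

Definition conj_in_GL (W1 W2 : {pred 'M[int]_n}) : Prop :=
  exists2 P : 'M[int]_n, P \in unitmx &
    forall A, A \in W2 <-> exists2 B, B \in W1 & A = P *m B *m invmx P.

End Torus.

(* Main.v *)
Require Import Defs.
From HB Require Import structures.
From mathcomp Require Import all_boot all_order all_algebra.
From mathcomp Require Import complex.
From mathcomp Require Import reals.
From Stdlib Require Import FunctionalExtensionality.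
From mathcomp Require Import zify.
Set Implicit Arguments.
Unset Strict Implicit.
Unset Printing Implicit Defensive.
Import Order.TTheory GRing.Theory Num.Theory.
Local Open Scope ring_scope.

Section Basics.
Variables (R : realType) (n : nat).
Local Notation C := (R[i]).
Local Notation T := (torus R n).

Lemma torus_eq (x y : T) : (forall j, val x 0 j = val y 0 j) -> x = y.
Proof. by move=> H; apply: val_inj; apply/rowP => j; exact: H. Qed.

Lemma torus_neq0 (x : T) j : val x 0 j != 0.
Proof. by have /forallP := valP x; apply. Qed.

Lemma chi_neq0 (m : 'rV[int]_n) (x : T) : chi m x != 0.
Proof. by apply/prodf_neq0 => j _; rewrite expfz_neq0 // torus_neq0. Qed.

Lemma torus1E j : val (torus1 R n) 0 j = 1.
Proof. by rewrite /= mxE. Qed.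

Lemma tmulE (t x : T) j : val (tmul t x) 0 j = val t 0 j * val x 0 j.
Proof.
rewrite /tmul insubdK ?mxE //.
by apply/forallP => k; rewrite mxE mulf_neq0 // torus_neq0.
Qed.

Lemma actE (A : 'M[int]_n) (x : T) j : val (act A x) 0 j = chi (row j A) x.
Proof.
rewrite /act insubdK ?mxE //.
by apply/forallP => k; rewrite mxE chi_neq0.
Qed.

Definition tinv (t : T) : T := insubd (torus1 R n) (\row_j (val t 0 j)^-1).

Lemma tinvE (t : T) j : val (tinv t) 0 j = (val t 0 j)^-1.
Proof.
rewrite /tinv insubdK ?mxE //.
by apply/forallP => k; rewrite mxE invr_eq0 torus_neq0.
Qed.

Local Strategy opaque [act tmul tinv torus1].
Lemma tmulC (t x : T) : tmul t x = tmul x t.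
Proof. by apply: torus_eq => j; rewrite !tmulE mulrC. Qed.
Lemma tmulA (t x y : T) : tmul t (tmul x y) = tmul (tmul t x) y.
Proof. by apply: torus_eq => j; rewrite !tmulE mulrA. Qed.
Lemma tmul1 (x : T) : tmul (torus1 R n) x = x.
Proof. by apply: torus_eq => j; rewrite !tmulE torus1E mul1r. Qed.
Lemma tmulV (x : T) : tmul (tinv x) x = torus1 R n.
Proof. by apply: torus_eq => j; rewrite [LHS]tmulE tinvE [RHS]torus1E mulVf ?torus_neq0. Qed.

Lemma chi_tmul (m : 'rV[int]_n) (t x : T) : chi m (tmul t x) = chi m t * chi m x.
Proof. by rewrite /chi -big_split /=; apply: eq_bigr => j _; rewrite tmulE expfzMl. Qed.

Lemma chiD (m1 m2 : 'rV[int]_n) (x : T) : chi (m1 + m2) x = chi m1 x * chi m2 x.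
Proof. by rewrite /chi -big_split /=; apply: eq_bigr => j _; rewrite mxE expfzDr ?torus_neq0. Qed.

Lemma chi0 (x : T) : chi 0 x = 1.
Proof. by rewrite /chi big1 // => j _; rewrite mxE expr0z. Qed.

Lemma chiN (m : 'rV[int]_n) (x : T) : chi (- m) x * chi m x = 1.
Proof. by rewrite -chiD addNr chi0. Qed.

Lemma chi_torus1 (m : 'rV[int]_n) : chi m (torus1 R n) = 1.
Proof. by rewrite /chi big1 // => j _; rewrite torus1E exp1rz. Qed.

Lemma chi_delta j (x : T) : chi (delta_mx 0 j) x = val x 0 j.
Proof.
rewrite /chi (bigD1 j) //= big1 ?mulr1.
  by rewrite mxE !eqxx /= expr1z.
by move=> k /negbTE kj; rewrite mxE kj andbF expr0z.
Qed.

Lemma chi_act (m : 'rV[int]_n) (A : 'M[int]_n) (x : T) : chi m (act A x) = chi (m *m A) x.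
Proof.
rewrite /chi.
transitivity (\prod_(j < n) \prod_(k < n) (val x 0 k) ^ (A j k * m 0 j)).
  apply: eq_bigr => j _; rewrite actE /chi.
  have -> : forall (F : 'I_n -> C) e, (\prod_(k < n) F k) ^ e = \prod_(k < n) (F k ^ e).
    move=> F e; elim/big_rec2: _ => [|k y1 y2 _ <-]; first by rewrite exp1rz.
    by rewrite expfzMl.
  by apply: eq_bigr => k _; rewrite mxE exprz_exp.
rewrite exchange_big /=; apply: eq_bigr => k _.
rewrite mxE.
have -> : forall (F : 'I_n -> int) (y : C), y != 0 -> y ^ (\sum_(j < n) F j) = \prod_(j < n) (y ^ F j).
  move=> F y y0; elim/big_rec2: _ => [|j a b _ <-]; first by rewrite expr0z.
  by rewrite expfzDr.
- by apply: eq_bigr => j _; rewrite mulrC.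
- by rewrite torus_neq0.
Qed.
Lemma act_mul (A B : 'M[int]_n) (x : T) : act (A *m B) x = act A (act B x).
Proof. by apply: torus_eq => j; rewrite [LHS]actE [RHS]actE chi_act row_mul. Qed.

Lemma act1 (x : T) : act 1%:M x = x.
Proof. by apply: torus_eq => j; rewrite [LHS]actE row1 chi_delta. Qed.

Lemma act_tmul (A : 'M[int]_n) (t x : T) : act A (tmul t x) = tmul (act A t) (act A x).
Proof.
apply: torus_eq => j; rewrite [LHS]actE [RHS]tmulE chi_tmul.
by congr (_ * _); rewrite actE.
Qed.

Lemma act_torus1 (A : 'M[int]_n) : act A (torus1 R n) = torus1 R n.
Proof. apply torus_eq. intro j. rewrite [LHS]actE. rewrite [RHS]torus1E. rewrite chi_torus1. by []. Qed.

Lemma aut_comp (t : T) A (s : T) B (x : T) :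
  aut t A (aut s B x) = aut (tmul t (act A s)) (A *m B) x.
Proof. by rewrite /aut act_tmul act_mul tmulA. Qed.

Lemma aut_id (x : T) : aut (torus1 R n) 1%:M x = x.
Proof. by rewrite /aut act1 tmul1. Qed.


Lemma autE (t : T) A (x : T) : aut t A x = tmul t (act A x).
Proof. by []. Qed.

Local Strategy opaque [aut mulmx invmx].

Lemma exprz_sum (y : C) (F : 'I_n -> int) : y != 0 ->
  y ^ (\sum_(k < n) F k) = \prod_(k < n) y ^ F k.
Proof.
move=> y0; elim/big_rec2: _ => [|j a b _ <-]; first by rewrite expr0z.
by rewrite expfzDr.
Qed.

Lemma two_neq0 : (2 : C) != 0.
Proof. by rewrite pnatr_eq0. Qed.

Lemma two_inj (a b : int) : (2 : C) ^ a = 2 ^ b -> a = b.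
Proof.
move=> E; have : (2 : C) ^ (a - b) = 1.
  by rewrite expfzDr ?two_neq0 // E -expfzDr ?two_neq0 // subrr expr0z.
have two1 : ((2 : C) == 1) = false by rewrite (eqr_nat C 2 1).
case Ed: (a - b) => [k|k] /eqP.
- rewrite pexprn_eq1 ?ler0n // two1 orbF => /eqP k0.
  by apply: subr0_eq; rewrite Ed k0.
- rewrite invr_eq1 pexprn_eq1 ?ler0n // two1.
  by [].
Qed.

Lemma aut_lin_inj (t s : T) (A B : 'M[int]_n) :
  (forall x, aut t A x = aut s B x) -> t = s /\ A = B.
Proof.
move=> H.
have ts : t = s.
  have := H (torus1 R n); rewrite !autE !act_torus1.
  by rewrite [tmul t _]tmulC [tmul s _]tmulC !tmul1.
split=> //; subst s.
have HA : forall x : T, act A x = act B x.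
  move=> x; have := congr1 (tmul (tinv t)) (H x).
  by rewrite !autE !tmulA tmulV !tmul1.
apply/matrixP => j k.
have ptP : torus_pred (\row_l (if l == k then 2 else 1) : 'rV[C]_n).
  by apply/forallP => l; rewrite mxE; case: ifP => _; rewrite ?two_neq0 ?oner_neq0.
pose pt : T := exist (fun x : 'rV[C]_n => is_true (torus_pred x)) _ ptP.
have ptE : forall (m : 'rV[int]_n), chi m pt = 2 ^ (m 0 k).
  move=> m; rewrite /chi (bigD1 k) //= big1 ?mulr1 => [|l lk].
    by rewrite mxE eqxx.
  by rewrite mxE (negbTE lk) exp1rz.
have := congr1 (fun y : T => val y 0 j) (HA pt).
rewrite /= [X in X = _]actE [X in _ = X]actE !ptE !mxE.
exact: two_inj.
Qed.

Lemma aut_regular (t : T) A : regular_map (aut t A).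
Proof.
move=> m; exists [:: (chi m t, m *m A)] => x.
by rewrite big_seq1 autE chi_tmul chi_act.
Qed.

Lemma L1V (a b : seq (C * int)) :
  (forall z : C, z != 0 ->
     (\sum_(p <- a) p.1 * z ^ p.2) * (\sum_(p <- b) p.1 * z ^ p.2) = 1) ->
  exists e0 : int, forall e, e != e0 -> \sum_(p <- a | p.2 == e) p.1 = 0.
Proof.
move=> H.
pose N : nat := \sum_(p <- a) absz p.2.
have HN : forall p, p \in a -> 0 <= p.2 + N%:Z.
  move=> p pa; have : (absz p.2 <= N)%N by rewrite /N (big_rem p) //= leq_addr.
  move=> le; lia.
clearbody N.
pose P : {poly C} := \sum_(p <- a) p.1 *: 'X^(absz (p.2 + N%:Z)).
have HP : forall z, z != 0 -> P.[z] = z ^+ N * \sum_(p <- a) p.1 * z ^ p.2.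
  move=> z z0; rewrite horner_sum mulr_sumr; apply: eq_big_seq => p pa.
  have E : z ^+ absz (p.2 + N%:Z) = z ^ p.2 * z ^+ N.
    by rewrite -[LHS]/(z ^ (Posz _)) gez0_abs ?HN // expfzDr.
  by rewrite hornerZ hornerXn E mulrA mulrC.
have Pz : forall z, z != 0 -> P.[z] != 0.
  move=> z z0; rewrite HP // mulf_neq0 ?expf_neq0 //.
  apply/eqP => F0; have := H z z0; by rewrite F0 mul0r => /eqP; rewrite eq_sym oner_eq0.
have P0 : P != 0.
  by apply/eqP => P0; move: (Pz 1 (oner_neq0 _)); rewrite P0 horner0 eqxx.
case: (closed_field_poly_normal P) => r Pr.
have r0 : forall z, z \in r -> z = 0.
  move=> z zr; apply/eqP; apply: contraT => z0; have := Pz z z0.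
  by rewrite Pr hornerZ horner_prod (big_rem z) //= hornerXsubC subrr mul0r mulr0 eqxx.
have PX : P = lead_coef P *: 'X^(size r).
  rewrite {1}Pr; congr (_ *: _).
  elim: r {Pr} r0 => [|z r IH] r0; first by rewrite big_nil expr0.
  rewrite big_cons (r0 z) ?mem_head // polyC0 subr0 IH ?exprS // => y yr.
  by apply: r0; rewrite inE yr orbT.
exists ((size r)%:Z - N%:Z) => e ne.
case: (boolP (0 <= e + N%:Z)) => he.
  transitivity (P`_(absz (e + N%:Z))).
    rewrite coef_sumMXn big_seq_cond [RHS]big_seq_cond; apply: eq_bigl => p /=.
    case pa: (p \in a) => //=; have := HN p pa.
    move=> h; apply/eqP/eqP => [->//|E].
    by have := congr1 Posz E; rewrite !gez0_abs // => /addIr.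
  rewrite PX coefZ coefXn; case: eqP => [E|]; last by rewrite mulr0.
  by move: ne; rewrite -E; lia.
rewrite big1_seq // => p /andP [/eqP pe pa].
by move: (HN p pa); rewrite pe => h; move: he; rewrite h.
Qed.


Lemma exists_w (S : seq 'rV[int]_n) : exists w : 'I_n -> int,
  forall m m' : 'rV[int]_n, m \in S -> m' \in S ->
    \sum_k m 0 k * w k = \sum_k m' 0 k * w k -> m = m'.
Proof.
pose Pd (d : 'rV[int]_n) : {poly int} := \sum_(k < n) d 0 k *: 'X^k.
have Pd0 : forall d, d != 0 -> Pd d != 0.
  move=> d; apply: contraNneq => H; apply/eqP/rowP => k.
  have := congr1 (fun p : {poly int} => p`_k) H.
  rewrite coef_sumMXn coef0 mxE (big_pred1 k) //.
pose Q := \prod_(m <- S) \prod_(m' <- S | m != m') Pd (m - m').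
have Q0 : Q != 0.
  rewrite prodf_seq_neq0; apply/allP => m _ /=.
  rewrite prodf_seq_neq0; apply/allP => m' _ /=.
  by apply/implyP => mm'; apply: Pd0; rewrite subr_eq0.
pose rs := [seq (i%:Z) | i <- iota 0 (size Q)].
have : ~~ all (root Q) rs.
  apply/negP => H.
  have U : uniq rs by rewrite map_inj_uniq ?iota_uniq // => i j [].
  by have := max_poly_roots Q0 H U; rewrite size_map size_iota ltnn.
case/allPn => _ /mapP [N _ ->] NQ.
exists (fun k => (N%:Z) ^+ k).
move=> m m' mS m'S E; apply/eqP; apply: contraNT NQ => mm'.
rewrite /root /Q horner_prod prodf_seq_eq0; apply/hasP; exists m => //=.
rewrite horner_prod prodf_seq_eq0; apply/hasP; exists m' => //=; rewrite mm' /=.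
rewrite horner_sum.
rewrite (eq_bigr (fun i => m 0 i * N%:Z ^+ i - m' 0 i * N%:Z ^+ i)).
  by rewrite sumrB E subrr.
by move=> i _; rewrite hornerZ hornerXn !mxE mulrBl.
Qed.

Lemma grouping (s : seq (C * 'rV[int]_n)) (F : 'rV[int]_n -> C) :
  \sum_(p <- s) p.1 * F p.2 =
  \sum_(m <- undup (map snd s)) (\sum_(p <- s | p.2 == m) p.1) * F m.
Proof.
transitivity (\sum_(m <- undup (map snd s))
                \sum_(p <- s) (if p.2 == m then p.1 * F p.2 else 0)); last first.
  apply: eq_bigr => m _; rewrite mulr_suml [RHS]big_mkcond; apply: eq_bigr => p _.
  by case: eqP => [->|]; rewrite ?mul0r.
rewrite exchange_big /=; apply: eq_big_seq => p ps.
rewrite (bigD1_seq p.2) ?undup_uniq ?mem_undup ?map_f //= eqxx big1 ?addr0 //.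
by move=> m /negbTE mp; rewrite eq_sym mp.
Qed.

Lemma unit_mono (f g : T -> C) : regular_fun f -> regular_fun g ->
  (forall x, f x * g x = 1) -> exists c m, forall x, f x = c * chi m x.
Proof.
case=> s Hs [s' Hs'] H.
have [w Hw] := exists_w (map snd s).
pose wt (m : 'rV[int]_n) := \sum_k m 0 k * w k.
pose gam (z : C) : T := insubd (torus1 R n) (\row_k z ^ w k).
have chig : forall z m, z != 0 -> chi m (gam z) = z ^ wt m.
  move=> z m z0; rewrite /chi /gam insubdK; last first.
    by apply/forallP => k; rewrite mxE expfz_neq0.
  rewrite /wt exprz_sum //; apply: eq_bigr => k _.
  by rewrite mxE exprz_exp mulrC.
have [e0 He0] : exists e0 : int, forall e, e != e0 ->
    \sum_(p <- map (fun p => (p.1, wt p.2)) s | p.2 == e) p.1 = 0.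
  apply: (@L1V _ (map (fun p => (p.1, wt p.2)) s')).
  move=> z z0; rewrite !big_map /=.
  have E : forall s0 : seq (C * 'rV[int]_n),
      \sum_(p <- s0) p.1 * z ^ wt p.2 = \sum_(p <- s0) p.1 * chi p.2 (gam z).
    by move=> s0; apply: eq_bigr => p _; rewrite chig.
  by rewrite !E -Hs -Hs' H.
have coef0 : forall m, m \in map snd s -> wt m != e0 ->
    \sum_(p <- s | p.2 == m) p.1 = 0.
  move=> m mS ne; rewrite -[RHS](He0 _ ne) big_map /= big_seq_cond [RHS]big_seq_cond.
  apply: eq_bigl => p /=.
  case ps: (p \in s) => //=; apply/eqP/eqP => [->//|].
  by apply: Hw => //; exact: map_f.
case: (boolP (has (fun m => wt m == e0) (map snd s))) => [/hasP [m0 m0S /eqP wm0]|hn].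
  exists (\sum_(p <- s | p.2 == m0) p.1), m0 => x.
  rewrite Hs (grouping s (fun m => chi m x)) (bigD1_seq m0) ?undup_uniq ?mem_undup //=.
  rewrite [X in _ + X]big1_seq ?addr0 //.
  move=> m /andP [mm0 mS]; rewrite mem_undup in mS.
  rewrite coef0 ?mul0r // -wm0; apply: contra mm0 => /eqP E; apply/eqP.
  exact: Hw E.
exists 0, 0 => x; rewrite Hs (grouping s (fun m => chi m x)) mul0r big1_seq // => m /andP [_ mS].
rewrite mem_undup in mS.
rewrite coef0 ?mul0r //; apply: contra hn => /eqP E; apply/hasP; exists m => //.
by rewrite E.
Qed.

Lemma regular_form (F : T -> T) : regular_map F -> exists t A, forall x, F x = aut t A x.
Proof.
move=> rF.
have H : forall j : 'I_n, exists cm : C * 'rV[int]_n,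
    forall x, val (F x) 0 j = cm.1 * chi cm.2 x.
  move=> j.
  have [c [m Hm]] := unit_mono (rF (delta_mx 0 j)) (rF (- delta_mx 0 j))
                      (fun x => etrans (mulrC _ _) (chiN _ _)).
  by exists (c, m) => x; rewrite -chi_delta Hm.
have [cm Hcm] := fin_all_exists H.
have c0 : forall j, (cm j).1 != 0.
  move=> j; have := torus_neq0 (F (torus1 R n)) j; rewrite Hcm.
  by apply: contraNneq => ->; rewrite mul0r.
have tP : torus_pred (\row_j (cm j).1).
  by apply/forallP => k; rewrite mxE c0.
pose t : T := exist (fun x : 'rV[C]_n => is_true (torus_pred x)) _ tP.
pose A : 'M[int]_n := \matrix_(j, k) (cm j).2 0 k.
exists t, A => x; apply: torus_eq => j.
rewrite Hcm autE tmulE actE /= mxE; congr (_ * chi _ _).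
by apply/rowP => k; rewrite !mxE.
Qed.

Lemma biregular_form (Phi : T -> T) : biregular Phi ->
  exists t P, P \in unitmx /\ forall x, Phi x = aut t P x.
Proof.
move=> [G [c1 c2 rF rG]].
have [t [A HA]] := regular_form rF; have [s [B HB]] := regular_form rG.
exists t, A; split=> //.
have [_ AB] : tmul t (act A s) = torus1 R n /\ A *m B = 1%:M.
  by apply: aut_lin_inj => x; rewrite -aut_comp -HB -HA c2 aut_id.
by case/mulmx1_unit: AB.
Qed.

Lemma dir_ac (W1 W2 : {pred 'M[int]_n}) :
  (exists phi, group_iso (@semidirect R n W1) (@semidirect R n W2) phi /\
     exists Phi, biregular Phi /\ equivariant (@semidirect R n W1) phi Phi) ->
  conj_in_GL W1 W2.
Proof.
move=> [phi [[Hmap _ Hsurj _] [Phi [Hbi Heq]]]].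
have [t0 [P [Pu HP]]] := biregular_form Hbi.
have key : forall (t : T) B (s : T) A,
    (forall x, Phi (aut t B x) = aut s A (Phi x)) -> A = P *m B *m invmx P.
  move=> t B s A H.
  have [_ E] : tmul t0 (act P t) = tmul s (act A t0) /\ P *m B = A *m P.
    apply: aut_lin_inj => x.
    exact: (etrans (esym (aut_comp t0 P t B x)) (etrans (esym (HP _)) (etrans (H x) (etrans (congr1 (aut s A) (HP x)) (aut_comp s A t0 P x))))).

  exact: (canRL (mulmxK Pu) (esym E)).
exists P => // A; split.
- move=> AW2.
  have [g g1 gA] := Hsurj (aut (torus1 R n) A) (ex_intro _ (torus1 R n) (ex_intro _ A (conj AW2 erefl))).
  case: (g1) => t [B [BW gE]]; exists B => //.
  apply: (key t B (torus1 R n)) => x.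
  by rewrite -gE (Heq _ g1 x) gA.
- case=> B BW ->.
  have g1 : @semidirect R n W1 (aut (torus1 R n) B) by exists (torus1 R n), B.
  have [s [A' [A'W E]]] := Hmap _ g1.
  have HA' : A' = P *m B *m invmx P.
    by apply: (key (torus1 R n) B s A') => x; rewrite (Heq _ g1 x) E.
  by subst A'.
Qed.

Lemma dir_cb (W1 W2 : {pred 'M[int]_n}) :
  conj_in_GL W1 W2 -> conj_in_Aut (@semidirect R n W1) (@semidirect R n W2).
Proof.
move=> [P Pu HW]; exists (aut (torus1 R n) P); first by exists (torus1 R n), P.
move=> g2; split.
- case=> t [A [AW ->]]; have [B BW AE] := (HW A).1 AW.
  exists (aut (act (invmx P) t) B); first by exists (act (invmx P) t), B.
  apply: functional_extensionality => x /=; rewrite !aut_comp.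
  rewrite act_torus1 -act_mul (mulmxV Pu) act1 tmul1 [tmul t _]tmulC tmul1.
  by rewrite AE (mulmxKV Pu).
- case=> g1 [t [B [BW ->]]] E.
  have AW : P *m B *m invmx P \in W2 by apply/HW; exists B.
  exists (act P t), (P *m B *m invmx P); split; first exact AW.
  apply: functional_extensionality => y.
  have [z ->] : exists z, y = aut (torus1 R n) P z.
    exists (aut (torus1 R n) (invmx P) y).
    by rewrite aut_comp act_torus1 tmul1 (mulmxV Pu) aut_id.
  have := congr1 (fun f => f z) E => /= ->.
  rewrite !aut_comp act_torus1 tmul1 [tmul (act P t) _]tmulC tmul1.
  by rewrite (mulmxKV Pu).
Qed.

Lemma dir_ba (W1 W2 : {pred 'M[int]_n}) :
  conj_in_Aut (@semidirect R n W1) (@semidirect R n W2) ->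
  (exists phi, group_iso (@semidirect R n W1) (@semidirect R n W2) phi /\
     exists Phi, biregular Phi /\ equivariant (@semidirect R n W1) phi Phi).
Proof.
move=> [h [t [P [Pu ->]]] Hc].
pose t' := act (invmx P) (tinv t).
pose hi := aut t' (invmx P).
have hK : cancel (aut t P) hi.
  by move=> x; rewrite /hi aut_comp (mulVmx Pu) /t' -act_tmul tmulV act_torus1 aut_id.
have hK' : cancel hi (aut t P).
  move=> x; rewrite /hi aut_comp /t' -act_mul !(mulmxV Pu) act1.
  by rewrite [tmul t _]tmulC tmulV aut_id.
exists (fun g => aut t P \o g \o hi); split.
  split.
  - move=> g g1; apply/Hc; exists g; first exact: g1.
    by apply: functional_extensionality => x /=; rewrite hK.
  - move=> g g' _ _ E; apply: functional_extensionality => x.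
    have := congr1 (fun f => f (aut t P x)) E => /=; rewrite !hK.
    exact: (can_inj hK).
  - move=> g2 /Hc [g1 g1G E]; exists g1; first exact: g1G.
    apply: functional_extensionality => y /=.
    have := congr1 (fun f => f (hi y)) E => /= E'.
    by rewrite hK' in E'; rewrite E'.
  - move=> g h' _ _; apply: functional_extensionality => x /=.
    by rewrite hK.
exists (aut t P); split.
- by exists hi; split => //; exact: aut_regular.
- by move=> g _ x /=; rewrite hK.
Qed.

End Basics.

Theorem lemma3p1 (R : realType) (n : nat) (W1 W2 : {pred 'M[int]_n}) :
  finite_GL_subgroup W1 -> finite_GL_subgroup W2 ->
  [<-> (exists phi, group_iso (@semidirect R n W1) (@semidirect R n W2) phi /\
          exists Phi, biregular Phi /\ equivariant (@semidirect R n W1) phi Phi);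
       conj_in_Aut (@semidirect R n W1) (@semidirect R n W2);
       conj_in_GL W1 W2].
Proof.
move=> _ _; tfae.
- by move=> Ha; apply: dir_cb; exact: dir_ac Ha.
- by move=> Hb; exact: dir_ac (dir_ba Hb).
- by move=> Hc; apply: dir_ba; exact: (@dir_cb R n W1 W2 Hc).
Qed.
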